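(* Let $P$ be a finite lattice, let $\mu:2^P\to\mathbb{R}_{\ge0}$ be additive, and let $r(f)=\mu(P\setminus\Phi f)$ for $f\in\mathcal{L}_P$. For $f\in\mathcal{L}_P$ define $\mathrm{resilience}(f)=\min\{r(s): s\in\mathcal{L}_P,\ f+s=1\}$ and $\mathrm{fragility}(f)=\max\{r(w): w\in\mathcal{L}_P,\ w\le f,\ w\text{ prime}\}$. Then $\mathrm{fragility}(f)+\mathrm{resilience}(f)=r(1)$.
   Context: $P$ is a finite lattice with greatest element $\hat p$. $\mathcal{L}_P$ is the set of maps $f:P\to P$ satisfying (A.1) $a\le f(a)$; (A.2) $a\le b\Rightarrow f(a)\le f(b)$; (A.3) $f(f(a))=f(a)$, ordered pointwise; it is a lattice with join $+$ and greatest element $1:a\mapsto\hat p$. $\Phi f=\{a:f(a)=a\}$. $f$ is prime if $P\setminus\Phi f$ is closed under $\wedge$. *)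

(* Defs.v *)
From HB Require Import structures.
From mathcomp Require Import all_boot all_order all_algebra.
Set Implicit Arguments. Unset Strict Implicit. Unset Printing Implicit Defensive.
Import Order.TTheory GRing.Theory Num.Theory.

Section ClosureOps.
Variables (d : Order.disp_t) (P : finTBLatticeType d).
Local Open Scope order_scope.

Definition is_closure (f : {ffun P -> P}) : bool :=
  [&& [forall a, a <= f a],
      [forall a, forall b, (a <= b) ==> (f a <= f b)] &
      [forall a, f (f a) == f a]].

Definition clo_le (f g : {ffun P -> P}) : bool := [forall a, f a <= g a].

Definition clo_top : {ffun P -> P} := [ffun _ => \top].

(* the join f + g in L_P: the closure operator whose fixed points are the
   common fixed points of f and g *)
Definition clo_join (f g : {ffun P -> P}) : {ffun P -> P} :=
  [ffun a => \meet_(x | (a <= x) && (f x == x) && (g x == x)) x].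

Definition nonfixed (f : {ffun P -> P}) : {set P} := [set a | f a != a].

Definition is_prime (f : {ffun P -> P}) : bool :=
  [forall a, forall b,
     (a \in nonfixed f) ==> (b \in nonfixed f) ==> ((a `&` b) \in nonfixed f)].

End ClosureOps.

Section Measures.
Variables (d : Order.disp_t) (P : finTBLatticeType d) (R : realFieldType).
Local Open Scope ring_scope.

Definition nonneg_additive (mu : {set P} -> R) : Prop :=
  (forall A, 0 <= mu A) /\
  (forall A B : {set P}, [disjoint A & B] -> mu (A :|: B) = mu A + mu B).

Definition rr (mu : {set P} -> R) (f : {ffun P -> P}) : R := mu (nonfixed f).

(* min { r(s) : s in L_P, f + s = 1 }; clo_top is always admissible, so
   using r(1) as the initial value of the fold does not change the min *)
Definition resilience (mu : {set P} -> R) (f : {ffun P -> P}) : R :=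
  \big[Num.min/rr mu (clo_top P)]_(s : {ffun P -> P} |
       is_closure s && (clo_join f s == clo_top P)) rr mu s.

(* max { r(w) : w in L_P, w <= f, w prime }; the identity is admissible
   with r = 0 and r >= 0, so the initial value 0 does not change the max *)
Definition fragility (mu : {set P} -> R) (f : {ffun P -> P}) : R :=
  \big[Num.max/0]_(w : {ffun P -> P} |
       [&& is_closure w, clo_le w f & is_prime w]) rr mu w.

End Measures.

(* Main.v *)
Require Import Defs.
From HB Require Import structures.
From mathcomp Require Import all_boot all_order all_algebra.
Import Order.TTheory GRing.Theory Num.Theory.
Set Implicit Arguments. Unset Strict Implicit.

Section Lat.
Variables (d : Order.disp_t) (P : finTBLatticeType d).
Local Open Scope order_scope.
Implicit Types (f w s : {ffun P -> P}) (M K : {set P}).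

Definition mcl M := [forall a, forall b, (a \in M) ==> (b \in M) ==> (a `&` b \in M)].

Lemma mclP M : reflect (forall a b, a \in M -> b \in M -> a `&` b \in M) (mcl M).
Proof.
apply: (iffP forallP) => [H a b aM bM|H a].
  by have /forallP/(_ b)/implyP/(_ aM)/implyP/(_ bM) := H a.
by apply/forallP => b; apply/implyP => aM; apply/implyP => bM; apply: H.
Qed.

Definition clo M : {ffun P -> P} := [ffun a => \meet_(x | (a <= x) && (x \in M)) x].

Lemma clo_mem M : mcl M -> \top \in M -> forall a, clo M a \in M.
Proof.
move=> /mclP H tM a; rewrite ffunE.
by elim/big_rec: _ => // x y /andP[_ xM] yM; apply: H.
Qed.

Lemma clo_ext M a : a <= clo M a.
Proof. by rewrite ffunE; apply/meetsP => x /andP[]. Qed.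

Lemma clo_fix M a : a \in M -> clo M a = a.
Proof.
move=> aM; apply/le_anti; rewrite clo_ext andbT ffunE.
by apply: (meets_inf (j := a)); rewrite lexx aM.
Qed.

Lemma clo_closure M : mcl M -> \top \in M -> is_closure (clo M).
Proof.
move=> mM tM; apply/and3P; split.
- by apply/forallP => a; apply: clo_ext.
- apply/forallP => a; apply/forallP => b; apply/implyP => ab.
  rewrite [clo M b]ffunE; apply/meetsP => x /andP[bx xM].
  rewrite ffunE; apply: (meets_inf (j := x)); rewrite xM andbT.
  exact: le_trans ab bx.
- by apply/forallP => a; rewrite clo_fix // clo_mem.
Qed.

Lemma nonfixed_clo M : mcl M -> \top \in M -> nonfixed (clo M) = ~: M.
Proof.
move=> mM tM; apply/setP => a; rewrite /nonfixed !inE.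
case aM: (a \in M); first by rewrite clo_fix // eqxx.
by apply/negP => /eqP E; move: (clo_mem mM tM a); rewrite E aM.
Qed.

Lemma cl_ext f : is_closure f -> forall a, a <= f a.
Proof. by case/and3P => /forallP. Qed.
Lemma cl_mono f : is_closure f -> forall a b, a <= b -> f a <= f b.
Proof. by case/and3P => _ /forallP H _ a b; have /forallP/(_ b)/implyP := H a. Qed.
Lemma cl_idem f : is_closure f -> forall a, f (f a) = f a.
Proof. by case/and3P => _ _ /forallP H a; apply/eqP. Qed.

Lemma cl_meet f a b : is_closure f -> f a = a -> f b = b -> f (a `&` b) = a `&` b.
Proof.
move=> cf fa fb; apply/le_anti; rewrite cl_ext // andbT lexI.
rewrite -{2}fa -{3}fb !cl_mono //; [exact: leIr | exact: leIl].
Qed.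

Lemma cl_top f : is_closure f -> f \top = \top.
Proof. by move=> cf; apply/le_anti; rewrite lex1 cl_ext. Qed.

Lemma top_nonfixed f : is_closure f -> \top \notin nonfixed f.
Proof. by move=> cf; rewrite /nonfixed inE cl_top // eqxx. Qed.

Lemma clo_le_sub w f : is_closure w -> clo_le w f -> nonfixed w \subset nonfixed f.
Proof.
move=> cw /forallP wf; apply/subsetP => a; rewrite /nonfixed !inE; apply: contraNN => /eqP fa.
by apply/eqP/le_anti; rewrite cl_ext // andbT -{2}fa wf.
Qed.

Lemma joinP f s : is_closure f -> is_closure s ->
  (clo_join f s == clo_top P) = [forall x, (f x == x) ==> (s x == x) ==> (x == \top)].
Proof.
move=> cf cs; apply/idP/idP.
- move=> /eqP E; apply/forallP => x; apply/implyP => fx; apply/implyP => sx.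
  have : clo_join f s x <= x by rewrite ffunE; apply: (meets_inf (j := x)); rewrite lexx fx sx.
  by rewrite E ffunE => H; apply/eqP/le_anti; rewrite H lex1.
- move=> /forallP H; apply/eqP/ffunP => a; rewrite !ffunE.
  apply/le_anti; rewrite lex1 /=; apply/meetsP => x /andP[/andP[_ fx] sx].
  by have /implyP/(_ fx)/implyP/(_ sx)/eqP -> := H x.
Qed.

Lemma mclU1 K : mcl K -> mcl (\top |: K).
Proof.
move=> /mclP H; apply/mclP => a b; rewrite !inE => /orP[/eqP->|aK] /orP[/eqP->|bK].
- by rewrite meetxx eqxx.
- by rewrite meet1x bK orbT.
- by rewrite meetx1 aK orbT.
- by rewrite H ?orbT.
Qed.

Lemma mem_meetU1 K a k : mcl K -> a \in K -> k \in \top |: K -> a `&` k \in K.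
Proof.
move=> /mclP H aK; rewrite !inE => /orP[/eqP->|kK]; first by rewrite meetx1.
exact: H.
Qed.

Section Max.
Variables (f : {ffun P -> P}) (cf : is_closure f).
Definition pK K := mcl K && (K \subset nonfixed f).

Lemma max_witness K x : maxset pK K -> x \notin K ->
  exists2 k, k \in \top |: K & f (x `&` k) = x `&` k.
Proof.
move=> /maxsetP [/andP[mK sK] maxK] xK.
set B := K :|: [set x `&` k | k in \top |: K].
have mK' := mclU1 mK.
have memB : forall b, b \in B -> b \in K \/ exists2 k, k \in \top |: K & b = x `&` k.
  by move=> b; rewrite inE => /orP[bK|/imsetP[k kK ->]]; [left|right; exists k].
have mB : mcl B.
  apply/mclP => a b /memB[aK|[ka kaK ->]] /memB[bK|[kb kbK ->]]; rewrite inE.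
  - by rewrite (mclP _ mK).
  - apply/orP; right; rewrite meetCA; apply: imset_f.
    by apply: (mclP _ mK') => //; rewrite inE aK orbT.
  - apply/orP; right; rewrite -meetA; apply: imset_f.
    by apply: (mclP _ mK') => //; rewrite inE bK orbT.
  - apply/orP; right; rewrite meetACA meetxx; apply: imset_f.
    exact: (mclP _ mK').
case: (boolP (B \subset nonfixed f)) => [sB|].
  have EB : B = K by apply: maxK; rewrite ?/pK ?mB ?sB ?subsetUl.
  case/negP: xK; rewrite -EB inE; apply/orP; right.
  rewrite -{1}(meetx1 x); apply: imset_f; by rewrite !inE eqxx.
case/subsetPn => b /memB[bK|[k kK ->]]; first by rewrite (subsetP sK).
by rewrite /nonfixed inE negbK => /eqP fb; exists k.
Qed.

Lemma max_compl K : maxset pK K -> mcl (~: K).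
Proof.
move=> mx; have /maxsetP [/andP[mK sK] _] := mx.
apply/mclP => a b; rewrite !inE => aK bK; apply/negP => abK.
have [ka kaK fa] := max_witness mx aK.
have [kb kbK fb] := max_witness mx bK.
have := cl_meet cf fa fb; rewrite meetACA => fz.
have : (a `&` b) `&` (ka `&` kb) \in K by apply: mem_meetU1 => //; apply: (mclP _ (mclU1 mK)).
by move=> /(subsetP sK); rewrite /nonfixed inE fz eqxx.
Qed.
End Max.

End Lat.

Section Meas.
Variables (d : Order.disp_t) (P : finTBLatticeType d) (R : realFieldType).
Variables (mu : {set P} -> R) (Hmu : nonneg_additive mu).
Local Open Scope ring_scope.

Lemma mu_disj (A B : {set P}) : [disjoint A & B] -> mu (A :|: B) = mu A + mu B.
Proof. by case: Hmu => _; apply. Qed.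

Lemma mu_mono (A B : {set P}) : A \subset B -> mu A <= mu B.
Proof.
move=> AB; have -> : B = A :|: (B :\: A).
  by apply/setP => x; rewrite !inE; case: (boolP (x \in A)) => // /(subsetP AB) ->.
rewrite mu_disj ?lerDl; first by case: Hmu.
by rewrite disjoints_subset setCD subsetUr.
Qed.

Lemma nonfixed_top : nonfixed (clo_top P) = ~: [set (\top)%O].
Proof. by apply/setP => a; rewrite /nonfixed !inE ffunE eq_sym. Qed.
End Meas.

Local Open Scope ring_scope.

Lemma fragility_ge0 (d : Order.disp_t) (P : finTBLatticeType d)
  (R : realFieldType) (mu : {set P} -> R) (Hmu : nonneg_additive mu) f :
  0 <= fragility mu f.
Proof.
rewrite /fragility; apply: (big_ind (fun x => 0 <= x)) => //.
  by move=> x y ? ?; rewrite le_max; apply/orP; left.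
by move=> i _; case: Hmu => H _; apply: H.
Qed.

Theorem mainTheorem17 (d : Order.disp_t) (P : finTBLatticeType d)
  (R : realFieldType) (mu : {set P} -> R) (Hmu : nonneg_additive mu)
  (f : {ffun P -> P}) (Hf : is_closure f) :
  fragility mu f + resilience mu f = rr mu (clo_top P).
Proof.
set T := rr mu (clo_top P).
have HT : T = mu (~: [set (\top)%O]) by rewrite /T /rr nonfixed_top.
have resT : resilience mu f <= T by rewrite /resilience; apply: bigmin_le_id.
have step1 : fragility mu f <= T - resilience mu f.
  rewrite /fragility; apply: bigmax_le; first by rewrite subr_ge0.
  move=> w /and3P[cw wf pw].
  have topw := top_nonfixed cw.
  have mN : mcl (nonfixed w) by exact: pw.
  set M := (\top |: nonfixed w)%O.
  have mM : mcl M by apply: mclU1.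
  have tM : (\top \in M)%O by rewrite !inE eqxx.
  have cs := clo_closure mM tM.
  have adm : is_closure (clo M) && (clo_join f (clo M) == clo_top P).
    rewrite cs /= joinP //; apply/forallP => x; apply/implyP => fx; apply/implyP => /eqP sx.
    have := clo_mem mM tM x; rewrite sx !inE => /orP[//|xN].
    by move: (subsetP (clo_le_sub cw wf) x); rewrite /nonfixed !inE fx xN => /(_ isT).
  have : resilience mu f <= rr mu (clo M) by rewrite /resilience; apply: bigmin_le_cond.
  rewrite /rr nonfixed_clo // => H.
  rewrite lerBrDr; apply: le_trans (lerD (lexx _) H) _.
  rewrite HT -(mu_disj Hmu); last by rewrite disjoints_subset setCK subsetUr.
  apply: (mu_mono Hmu); apply/subsetP => a;
  rewrite !inE; case: (eqVneq a \top%O) => [->|]; rewrite ?(negbTE topw) //=.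
  by rewrite cl_top // eqxx.
have step2 : T - fragility mu f <= resilience mu f.
  rewrite /resilience; apply: le_bigmin.
    by rewrite gerBl fragility_ge0.
  move=> s /andP[cs J]; rewrite joinP // in J.
  have tops := top_nonfixed cs.
  set K := (~: nonfixed s :\ \top)%O.
  have pKK : pK f K.
    apply/andP; split.
      apply/mclP => a b; rewrite /K /nonfixed !inE !negbK => /andP[ant /eqP sa] /andP[bnt /eqP sb].
      rewrite cl_meet // eqxx andbT; apply: contraNN ant => /eqP ab.
      by apply/eqP/le_anti; rewrite lex1 -ab leIl.
    apply/subsetP => a; rewrite /K /nonfixed !inE negbK => /andP[ant sa]; apply: contraNN ant => fa.
    by have /implyP/(_ fa)/implyP/(_ sa) := (forallP J) a.
  have [Ks mx sub] := maxset_exists pKK.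
  have /maxsetP[/andP[mKs sKs] _] := mx.
  have tK : (\top \in ~: Ks)%O.
    by rewrite inE; apply: contraNN (top_nonfixed Hf); apply: (subsetP sKs).
  have mC := max_compl Hf mx.
  have adm : [&& is_closure (clo (~: Ks)), clo_le (clo (~: Ks)) f & is_prime (clo (~: Ks))].
    rewrite clo_closure //=; apply/andP; split.
      apply/forallP => a; rewrite ffunE; apply: (meets_inf (j := f a)).
      rewrite cl_ext //= inE; apply: contraTN isT => /(subsetP sKs).
      by rewrite /nonfixed inE cl_idem // eqxx.
    by rewrite /is_prime nonfixed_clo // setCK.
  have : rr mu (clo (~: Ks)) <= fragility mu f by rewrite /fragility; apply: le_bigmax_cond.
  rewrite /rr nonfixed_clo // setCK => H.
  have E : T = mu (nonfixed s) + mu K.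
    rewrite HT -(mu_disj Hmu); last first.
      by rewrite disjoints_subset /K setDE setCI !setCK subsetUl.
    congr mu; apply/setP => a.
    rewrite /K !inE; case: (eqVneq a \top%O) => [->|]; rewrite ?cl_top ?eqxx //=.
    by move=> _; case: (s a != a).
  have := mu_mono Hmu sub; rewrite /rr in H |- * => HK.
  rewrite lerBlDr E; apply: le_trans (lerD (lexx _) (le_trans HK H)) _.
  by rewrite addrC.
apply/le_anti/andP; split.
  by rewrite -lerBrDr.
by rewrite -lerBlDl.
Qed.
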